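(* Let $N,M,r$ be positive integers and let $\xi^{1},\dots,\xi^{M}\in\{-1,+1\}^{N}$ be memory-vectors such that the Hamming distance between any two distinct memory-vectors is at least $\tau N$ for some $\tau>0$. Let $0<\rho<\frac{\tau}{2}$ and suppose $$M\le \exp\big(2N(\tau-2\rho)\big)\,\frac{1-e^{-2}}{2e^{2}}.$$ Let $E_{\mathrm{rand}}$ be the compact associative memory energy defined in the context (built from $r$ i.i.d. Gaussian random features $\omega_1,\dots,\omega_r\sim\mathcal N(0,\mathbf I_N)$ via the map $\phi_{F++}$ with any parameter $s\in(0,1)$). Then for every $l\in\{1,\dots,M\}$, every input $\widehat{\xi}^{l}\in\{-1,+1\}^N$ at Hamming distance at most $\rho N$ from $\xi^{l}$, and every coordinate $i\in\{1,\dots,N\}$, letting $\tilde{\xi}^{l}$ denote $\widehat{\xi}^{l}$ with its $i$-th coordinate negated and $\Delta(E_{\mathrm{rand}})=E_{\mathrm{rand}}(\tilde{\xi}^{l};\xi^1,\dots,\xi^M)-E_{\mathrm{rand}}(\widehat{\xi}^{l};\xi^1,\dots,\xi^M)$, the following holds: if $\widehat{\xi}^{l}_i=\xi^{l}_i$ (so the flip increases the Hamming distance to $\xi^l$) then $\mathbb{E}[\Delta(E_{\mathrm{rand}})]>0$, and if $\widehat{\xi}^{l}_i=-\xi^{l}_i$ (so the flip decreases the distance to $\xi^l$) then $\mathbb{E}[\Delta(E_{\mathrm{rand}})]<0$, where the expectation is over $\omega_1,\dots,\omega_r$.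
   Context: FAVOR++ random features: fix a parameter $s\in(0,1)$ and set $A=1-\frac{1}{s}$, $\widehat A=-A>0$, $B=\sqrt{1+4\widehat A}$, $C=-\frac12$, $D=(1+4\widehat A)^{N/4}$. For i.i.d. $\omega_1,\dots,\omega_r\sim\mathcal N(0,\mathbf I_N)$ define $\phi_{F++}:\mathbb R^N\to\mathbb R^r$ by $$\phi_{F++}(\mathbf z)=\frac{D}{\sqrt r}\Big(\exp\big(-\widehat A\|\omega_k\|_2^2+B\,\omega_k^\top\mathbf z+C\|\mathbf z\|_2^2\big)\Big)_{k=1}^{r}.$$ (This gives an unbiased estimator of the softmax kernel: $\mathbb E[\phi_{F++}(\mathbf x)^\top\phi_{F++}(\mathbf y)]=\exp(\mathbf x^\top\mathbf y)$.) The compact associative memory energy of an input $\xi\in\{-1,+1\}^N$ given memories $\xi^1,\dots,\xi^M$ is $$E_{\mathrm{rand}}(\xi;\xi^1,\dots,\xi^M)=\phi_{F++}(\xi)^\top\mathbf M,\qquad \mathbf M=-\sum_{\mu=1}^{M}\phi_{F++}(\xi^{\mu}),$$ with the same random vectors $\omega_k$ used throughout. *)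

(* Defs.v *)
From HB Require Import structures.
From mathcomp Require Import all_boot all_order all_algebra.
From mathcomp Require Import all_classical all_reals all_analysis.
Set Implicit Arguments. Unset Strict Implicit. Unset Printing Implicit Defensive.
Import Order.TTheory GRing.Theory Num.Theory.
Local Open Scope ring_scope.

Section defs.
Context {R : realType}.

Definition scons (x : R) (g : nat -> R) : nat -> R :=
  fun i => if i is i'.+1 then g i' else x.

(* Expectation of f(g_0,...,g_{n-1}) where g_0,...,g_{n-1} are i.i.d. N(0,1)
   (the coordinates g_i, i >= n, are irrelevant and set to 0).  Computed as the
   iterated integral against the standard normal probability measure
   [normal_prob 0 1] of MathComp-Analysis (= integral w.r.t. the product
   Gaussian measure, by Fubini, for integrable f). *)
Fixpoint gauss_expect (n : nat) (f : (nat -> R) -> R) : R :=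
  match n with
  | 0 => f (fun _ => 0)
  | n'.+1 => Rintegral (normal_prob (0:R) 1) setT
               (fun x => gauss_expect n' (fun g => f (scons x g)))
  end.

Definition omega_expect (N r : nat) (F : ('I_r -> 'I_N -> R) -> R) : R :=
  gauss_expect (r * N) (fun g => F (fun k j => g (k * N + j)%N)).

Definition dotv (N : nat) (x y : 'I_N -> R) : R := \sum_(j < N) x j * y j.
Definition sqnorm (N : nat) (x : 'I_N -> R) : R := dotv x x.

Definition Ahat (s : R) : R := 1 / s - 1.   (* = - A, A = 1 - 1/s *)
Definition Bpp (s : R) : R := Num.sqrt (1 + 4 * Ahat s).
Definition Cpp : R := - (1 / 2).
Definition Dpp (N : nat) (s : R) : R := powR (1 + 4 * Ahat s) (N%:R / 4).

Definition phiFpp (N r : nat) (s : R) (omega : 'I_r -> 'I_N -> R)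
  (z : 'I_N -> R) : 'I_r -> R :=
  fun k => Dpp N s / Num.sqrt r%:R *
    expR (- Ahat s * sqnorm (omega k) + Bpp s * dotv (omega k) z
          + Cpp * sqnorm z).

Definition E_rand (N r M : nat) (s : R) (omega : 'I_r -> 'I_N -> R)
  (mem : 'I_M -> 'I_N -> R) (xi : 'I_N -> R) : R :=
  \sum_(k < r) phiFpp s omega xi k *
     (- \sum_(mu < M) phiFpp s omega (mem mu) k).

Definition is_spin (N : nat) (x : 'I_N -> R) : Prop :=
  forall j, x j = 1 \/ x j = -1.

Definition hamming (N : nat) (x y : 'I_N -> R) : nat :=
  #|[set j : 'I_N | x j != y j]|.

Definition flip (N : nat) (x : 'I_N -> R) (i : 'I_N) : 'I_N -> R :=
  fun j => if j == i then - x j else x j.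

End defs.

(* Main.v *)
Require Import Defs.
From HB Require Import structures.
From mathcomp Require Import all_boot all_order all_algebra.
From mathcomp Require Import all_classical all_reals all_analysis.
From mathcomp Require Import measurable_realfun.
From mathcomp Require Import ring lra.
Import Order.TTheory GRing.Theory Num.Theory.
Local Open Scope ring_scope.

Module Aux.
Set Implicit Arguments. Unset Strict Implicit. Unset Printing Implicit Defensive.
Import numFieldNormedType.Exports.
Local Open Scope classical_set_scope.
Local Open Scope ring_scope.
Section s.
Context {R : realType}.
Definition Gf (a b : R) : R := expR (b ^+ 2 / (2 * (1 - 2 * a))) / Num.sqrt (1 - 2 * a).

Lemma pdf_shift (a b x : R) : a <= 0 ->
  expR (a * x ^+ 2 + b * x) * normal_pdf 0 1 x =
  Gf a b * normal_pdf (b / (1 - 2 * a)) (Num.sqrt (1 - 2 * a))^-1 x.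
Proof.
move=> a0; set p := 1 - 2 * a.
have p0 : 0 < p by rewrite /p; lra.
have sp : 0 < Num.sqrt p by rewrite sqrtr_gt0.
have pi0 : 0 < pi *+ 2 :> R by rewrite pmulrn_lgt0 // pi_gt0.
rewrite !normal_pdfE ?oner_neq0 ?invr_neq0 ?gt_eqF //.
rewrite /normal_peak /normal_fun /Gf -/p expr1n mul1r exprVn sqr_sqrtr ?ltW //.
rewrite -!mulrnAr sqrtrM ?invr_ge0 ?ltW // sqrtrV ?ltW //.
have E : expR (b ^+ 2 / (2 * p)) * expR (- (x - b / p) ^+ 2 / (p^-1 *+ 2)) =
  expR (a * x ^+ 2 + b * x) * expR (- (x - 0) ^+ 2 / 2).
  rewrite -!expRD; congr expR; rewrite /p; field.
  by rewrite -/p gt_eqF.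
have k0 : Num.sqrt (pi *+ 2) != 0 :> R by rewrite gt_eqF // sqrtr_gt0.
have s0 : Num.sqrt p != 0 by rewrite gt_eqF.
move: E k0 s0.
move: (expR (b ^+ 2 / (2 * p))) (expR (- (x - b / p) ^+ 2 / (p^-1 *+ 2))) (expR (a * x ^+ 2 + b * x)) (expR (- (x - 0) ^+ 2 / 2)) => e3 e4 e1 e2 E k0 s0.
rewrite invfM invrK.
have -> : e3 / Num.sqrt p * (Num.sqrt p * (Num.sqrt (pi *+ 2))^-1 * e4) = (e1 * e2) / Num.sqrt (pi *+ 2).
  rewrite -E; field.
  by rewrite k0 s0.
by rewrite mulrCA mulrC.
Qed.
Section e.
Local Open Scope ereal_scope.
Lemma ge0_integral_normal (m s : R) (f : R -> \bar R) : (forall x : R, 0 <= f x) -> measurable_fun setT f ->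
  \int[normal_prob m s]_x f x = \int[@lebesgue_measure R]_x (f x * (normal_pdf m s x)%:E).
Proof.
move=> f0 mf.
have numu := normal_prob_dominates m s.
rewrite -(Radon_Nikodym_SigmaFinite.change_of_variables numu) //.
apply: ae_eq_integral => //.
- apply: emeasurable_funM => //.
  apply: measurable_int (Radon_Nikodym_SigmaFinite.f_integrable _); exact: numu.
- by apply: emeasurable_funM => //; apply/measurable_EFinP; exact: measurable_normal_pdf.
- apply: ae_eqe_mul2l.
  apply: integral_ae_eq => //.
  + exact: Radon_Nikodym_SigmaFinite.f_integrable.
  + by apply/measurable_EFinP; exact: measurable_normal_pdf.
  + move=> E _ mE. by rewrite -Radon_Nikodym_SigmaFinite.f_integral.
Qed.
End e.

Lemma measurable_quad (a b : R) : measurable_fun setT (fun x : R => expR (a * x ^+ 2 + b * x)).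
Proof.
apply: measurableT_comp; first exact: measurable_expR.
apply: measurable_funD; apply: measurable_funM => //; exact: measurable_fun_pow.
Qed.

Lemma gauss1 (a b : R) : a <= 0 ->
  (normal_prob 0 1).-integrable setT (EFin \o (fun x => expR (a * x ^+ 2 + b * x))) /\
  Rintegral (normal_prob 0 1) setT (fun x => expR (a * x ^+ 2 + b * x)) = Gf a b.
Proof.
move=> a0.
have key : (\int[normal_prob 0 1]_x (expR (a * x ^+ 2 + b * x))%:E = (Gf a b)%:E)%E.
  have h1 : forall x : R, (0 <= (expR (a * x ^+ 2 + b * x))%:E)%E.
    by move=> x; rewrite lee_fin expR_ge0.
  have h2 := measurable_quad a b; move/measurable_EFinP in h2.
  rewrite (ge0_integral_normal 0 1 h1 h2).
  under eq_integral do rewrite -EFinM pdf_shift // EFinM.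
  rewrite integralZl //; last exact: integrable_normal_pdf.
  by rewrite integral_normal_pdf mule1.
split; last by rewrite /Rintegral key.
apply/integrableP; split.
  by apply/measurable_EFinP; exact: measurable_quad.
under eq_integral => x _.
  rewrite /= ger0_norm ?expR_ge0 //.
  over.
by rewrite key ltry.
Qed.

Notation nu := (normal_prob (0:R) 1).

Lemma integ_k (k a b : R) : a <= 0 ->
  nu.-integrable setT (EFin \o (fun x => k * expR (a * x ^+ 2 + b * x))).
Proof.
move=> a0.
apply: (@eq_integrable _ _ _ nu setT _ (fun x => k%:E * (EFin \o (fun x => expR (a * x ^+ 2 + b * x))) x)%E) => //;
  try by move=> x _ /=; rewrite EFinM.
by apply: integrableZl => //; exact: (gauss1 b a0).1.
Qed.

Lemma Rint_sum_seq (I : eqType) (s : seq I) (k a b : I -> R) : (forall t, a t <= 0) ->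
  nu.-integrable setT (EFin \o (fun x => \sum_(t <- s) k t * expR (a t * x ^+ 2 + b t * x))) /\
  Rintegral nu setT (fun x => \sum_(t <- s) k t * expR (a t * x ^+ 2 + b t * x)) =
  \sum_(t <- s) k t * Gf (a t) (b t).
Proof.
move=> ha; elim: s => [|t s [IHi IHv]].
  split.
    apply: (@eq_integrable _ _ _ nu setT _ (fun x => 0%E)) => //;
      try by move=> x _ /=; rewrite big_nil.
    exact: integrable0.
  rewrite big_nil (@eq_Rintegral _ _ _ nu setT (fun _ => 0)); last by move=> x _; rewrite big_nil.
  by rewrite Rintegral_cst // mul0r.
have hi := integ_k (k t) (b t) (ha t).
split.
  apply: (@eq_integrable _ _ _ nu setT _ (fun x => ((k t * expR (a t * x ^+ 2 + b t * x))%R%:E +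
     (\sum_(t <- s) k t * expR (a t * x ^+ 2 + b t * x))%R%:E)%E)) => //;
    try by move=> x _ /=; rewrite big_cons EFinD.
  exact: (integrableD _ hi IHi).
rewrite big_cons -IHv -(gauss1 (b t) (ha t)).2 -RintegralZl //; last exact: (gauss1 (b t) (ha t)).1.
rewrite -RintegralD //.
by apply: eq_Rintegral => x _; rewrite big_cons.
Qed.

Lemma Rint_sum (I : finType) (k a b : I -> R) : (forall t, a t <= 0) ->
  Rintegral nu setT (fun x => \sum_(t : I) k t * expR (a t * x ^+ 2 + b t * x)) =
  \sum_(t : I) k t * Gf (a t) (b t).
Proof. move=> ha; exact: (@Rint_sum_seq I (index_enum I) k a b ha).2. Qed.

Lemma gauss_expect_sum n (I : finType) (c : I -> R) (a b : I -> nat -> R) :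
  (forall t m, a t m <= 0) ->
  gauss_expect n (fun g => \sum_(t : I) c t * expR (\sum_(m < n) (a t m * g m ^+ 2 + b t m * g m))) =
  \sum_(t : I) c t * \prod_(m < n) Gf (a t m) (b t m).
Proof.
elim: n c a b => [|n IH] c a b ha.
  by rewrite /=; apply: eq_bigr => t _; rewrite !big_ord0 expR0.
rewrite /=.
have E : forall x, gauss_expect n (fun g => \sum_(t : I) c t * expR (\sum_(m < n.+1)
     (a t m * scons x g m ^+ 2 + b t m * scons x g m))) =
   \sum_(t : I) (c t * \prod_(m < n) Gf (a t m.+1) (b t m.+1)) * expR (a t 0 * x ^+ 2 + b t 0 * x).
  move=> x.
  rewrite (eq_bigr (fun t => (c t * expR (a t 0 * x ^+ 2 + b t 0 * x)) * \prod_(m < n) Gf (a t m.+1) (b t m.+1))); last by move=> t _; rewrite mulrAC.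
  rewrite -(IH (fun t => c t * expR (a t 0 * x ^+ 2 + b t 0 * x)) (fun t m => a t m.+1) (fun t m => b t m.+1)); last by move=> t m; exact: ha.
  congr (gauss_expect n _); apply: funext => g /=.
  apply: eq_bigr => t _; rewrite big_ord_recl expRD mulrA /=; congr (_ * expR _).
rewrite /=.
rewrite (@eq_Rintegral _ _ _ nu setT (fun x => \sum_(t : I) (c t * \prod_(m < n) Gf (a t m.+1) (b t m.+1)) * expR (a t 0 * x ^+ 2 + b t 0 * x))); last by move=> x _; exact: E.
rewrite Rint_sum; last by move=> t; exact: ha.
apply: eq_bigr => t _; rewrite big_ord_recl -mulrA; congr (_ * _).
by rewrite mulrC; congr (_ * _); apply: eq_bigr => i _; rewrite lift0.
Qed.
End s.


Lemma big_blocks (R' : Type) (idx : R') (op : Monoid.law idx) r N (F : nat -> R') :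
  \big[op/idx]_(m < r * N) F m = \big[op/idx]_(k < r) \big[op/idx]_(j < N) F (k * N + j)%N.
Proof.
elim: r => [|r IH]; first by rewrite mul0n !big_ord0.
by rewrite mulSnr big_split_ord IH big_ord_recr.
Qed.

Lemma big_blocks_sel (R' : Type) (idx : R') (op : Monoid.com_law idx) r N (k : 'I_r)
  (H : nat -> R') :
  \big[op/idx]_(m < r * N) (if (m %/ N == k)%N then H (nat_of_ord m) else idx) =
  \big[op/idx]_(j < N) H (k * N + j)%N.
Proof.
rewrite (big_blocks op r N (fun m => if (m %/ N == k)%N then H m else idx)) (eq_bigr (fun k' : 'I_r => if k' == k then \big[op/idx]_(j < N) H (k * N + j)%N else idx)); last first.
  move=> k' _.
  have E : forall (k'' : nat) (j : 'I_N), ((k'' * N + j) %/ N)%N = k''.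
    by move=> k'' j; rewrite divnMDl ?(leq_ltn_trans (leq0n j) (ltn_ord j)) // divn_small // addn0.
  case: eqP => [->|nk].
    by apply: eq_bigr => j _ /=; rewrite E eqxx.
  rewrite big1 // => j _ /=; rewrite E.
  have -> : (k' == k :> nat) = false by apply/eqP => /val_inj.
  by [].
by rewrite -big_mkcond big_pred1_eq.
Qed.

Section alg.
Context {R : realType}.


Definition extf N (v : 'I_N -> R) (j : nat) : R := if insub j is Some i then v i else 0.
Definition Aex (s : R) N (k m : nat) : R := if (m %/ N == k)%N then - (2 * Ahat s) else 0.
Definition Bex (s : R) N (k : nat) (u : 'I_N -> R) (m : nat) : R :=
  if (m %/ N == k)%N then Bpp s * extf u (m %% N) else 0.

Lemma extfE N (v : 'I_N -> R) (j : 'I_N) : extf v j = v j.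
Proof. by rewrite /extf valK. Qed.

Lemma Ahat_gt0 (s : R) : 0 < s < 1 -> 0 < Ahat s.
Proof.
move=> /andP[s0 s1]; rewrite /Ahat subr_gt0 div1r invf_gt1 //.
Qed.

Lemma modblock N (k : nat) (j : 'I_N) : ((k * N + j) %% N)%N = j.
Proof. by rewrite modnMDl modn_small. Qed.

Lemma sum_block (N r : nat) (s : R) (g : nat -> R) (k : 'I_r) (u : 'I_N -> R) :
  \sum_(m < r * N) (Aex s N k m * g m ^+ 2 + Bex s k u m * g m) =
  \sum_(j < N) (- (2 * Ahat s) * g (k * N + j)%N ^+ 2 + Bpp s * u j * g (k * N + j)%N).
Proof.
rewrite (eq_bigr (fun m : 'I_(r * N) => if (m %/ N == k)%N then
   - (2 * Ahat s) * g m ^+ 2 + Bpp s * extf u (m %% N) * g m else 0)); last first.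
  by move=> m _; rewrite /Aex /Bex; case: ifP => _; rewrite ?mul0r ?addr0.
rewrite (@big_blocks_sel _ _ _ r N k
  (fun m => - (2 * Ahat s) * g m ^+ 2 + Bpp s * extf u (m %% N) * g m)).
by apply: eq_bigr => j _; rewrite modblock extfE.
Qed.

Lemma term_expr (N r : nat) (s : R) (g : nat -> R) (k : 'I_r) (z y : 'I_N -> R) :
  phiFpp s (fun (k : 'I_r) (j : 'I_N) => g (k * N + j)%N) z k *
  phiFpp s (fun (k : 'I_r) (j : 'I_N) => g (k * N + j)%N) y k =
  ((Dpp N s / Num.sqrt r%:R) ^+ 2 * expR (Cpp * sqnorm z + Cpp * sqnorm y)) *
  expR (\sum_(m < r * N) (Aex s N k m * g m ^+ 2 + Bex s k (fun j => z j + y j) m * g m)).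
Proof.
rewrite sum_block /phiFpp mulrACA -expr2 -mulrA -expRD; congr (_ * _).
rewrite -expRD; congr expR.
rewrite /sqnorm /dotv.
have -> : \sum_(j < N) (- (2 * Ahat s) * g (k * N + j)%N ^+ 2 + Bpp s * (z j + y j) * g (k * N + j)%N)
  = - (2 * Ahat s) * \sum_(j < N) (g (k * N + j)%N * g (k * N + j)%N) +
    Bpp s * \sum_(j < N) (g (k * N + j)%N * z j) + Bpp s * \sum_(j < N) (g (k * N + j)%N * y j).
  rewrite !mulr_sumr -!big_split; apply: eq_bigr => j _ /=; ring.
ring.
Qed.

Lemma Gf00 : Gf (0:R) 0 = 1.
Proof. by rewrite /Gf expr0n /= mul0r mulr0 subr0 sqrtr1 expR0 divr1. Qed.

Lemma prod_G (N r : nat) (s : R) (k : 'I_r) (u : 'I_N -> R) : 0 < s < 1 ->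
  \prod_(m < r * N) Gf (Aex s N k m) (Bex s k u m) =
  expR (\sum_(j < N) u j ^+ 2 / 2) / Num.sqrt (1 + 4 * Ahat s) ^+ N.
Proof.
move=> hs; have A0 := Ahat_gt0 hs.
have q0 : 0 < 1 + 4 * Ahat s by lra.
rewrite (eq_bigr (fun m : 'I_(r * N) => if (m %/ N == k)%N then
   Gf (- (2 * Ahat s)) (Bpp s * extf u (m %% N)) else 1)); last first.
  by move=> m _; rewrite /Aex /Bex; case: ifP => _; rewrite ?Gf00.
rewrite (@big_blocks_sel _ _ _ r N k
  (fun m => Gf (- (2 * Ahat s)) (Bpp s * extf u (m %% N)))).
rewrite (eq_bigr (fun j : 'I_N => expR (u j ^+ 2 / 2) * (Num.sqrt (1 + 4 * Ahat s))^-1)); last first.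
  move=> j _ /=; rewrite modblock extfE /Gf.
  have -> : 1 - 2 * - (2 * Ahat s) = 1 + 4 * Ahat s by ring.
  congr (expR _ * _); rewrite exprMn /Bpp sqr_sqrtr ?ltW //; field; lra.
rewrite big_split /= -expR_sum prodr_const card_ord exprVn.
by [].
Qed.

Lemma Dpp_sq (N : nat) (s : R) : 0 < s < 1 ->
  Dpp N s ^+ 2 = Num.sqrt (1 + 4 * Ahat s) ^+ N.
Proof.
move=> hs; have A0 := Ahat_gt0 hs.
have q0 : 0 <= 1 + 4 * Ahat s by lra.
rewrite /Dpp -powR12_sqrt // -!powR_mulrn ?powR_ge0 // -!powRrM.
congr powR; rewrite mulr_natr; by field.
Qed.

End alg.


Section main.
Context {R : realType}.

Lemma sum_pair (I J : finType) (F : I * J -> R) :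
  \sum_(p : I * J) F p = \sum_(i : I) \sum_(j : J) F (i, j).
Proof. by rewrite pair_big; apply: eq_bigr => -[i j]. Qed.

Lemma E_rand_sum N r M (s : R) om (mem : 'I_M -> 'I_N -> R) z :
  E_rand s om mem z = \sum_(k < r) \sum_(mu < M) - (phiFpp s om z k * phiFpp s om (mem mu) k).
Proof. by rewrite /E_rand; apply: eq_bigr => k _; rewrite mulrN mulr_sumr sumrN. Qed.

Lemma expect_diff (N r M : nat) (s : R) (mem : 'I_M -> 'I_N -> R) (z1 z2 : 'I_N -> R) :
  (0 < r)%N -> 0 < s < 1 ->
  omega_expect (fun omega : 'I_r -> 'I_N -> R => E_rand s omega mem z1 - E_rand s omega mem z2) =
  \sum_(mu < M) (expR (dotv z2 (mem mu)) - expR (dotv z1 (mem mu))).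
Proof.
move=> r0 hs.
pose zt (t : 'I_r * 'I_M * bool) := if t.2 then z1 else z2.
pose sg (t : 'I_r * 'I_M * bool) : R := if t.2 then -1 else 1.
pose u (t : 'I_r * 'I_M * bool) := fun j => zt t j + mem t.1.2 j.
pose c (t : 'I_r * 'I_M * bool) := sg t * ((Dpp N s / Num.sqrt r%:R) ^+ 2 *
   expR (Cpp * sqnorm (zt t) + Cpp * sqnorm (mem t.1.2))).
have step : (fun g : nat -> R => E_rand s (fun (k : 'I_r) (j : 'I_N) => g (k * N + j)%N) mem z1 -
     E_rand s (fun (k : 'I_r) (j : 'I_N) => g (k * N + j)%N) mem z2) =
   (fun g => \sum_(t : 'I_r * 'I_M * bool) c t *
      expR (\sum_(m < r * N) (Aex s N t.1.1 m * g m ^+ 2 + Bex s t.1.1 (u t) m * g m))).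
  apply: funext => g.
  rewrite sum_pair (eq_bigr (fun p => \sum_(b : bool) c (p, b) *
      expR (\sum_(m < r * N) (Aex s N p.1 m * g m ^+ 2 + Bex s p.1 (u (p, b)) m * g m)))); last first.
    by move=> p _; apply: eq_bigr.
  under eq_bigr do rewrite big_bool.
  rewrite big_split /= !sum_pair !E_rand_sum.
  congr (_ + _).
    apply: eq_bigr => k _; apply: eq_bigr => mu _; rewrite term_expr /c /sg /zt /u /=; ring.
  rewrite -sumrN; apply: eq_bigr => k _; rewrite -sumrN; apply: eq_bigr => mu _.
  rewrite opprK term_expr /c /sg /zt /u /=; ring.
rewrite /omega_expect step.
rewrite (@gauss_expect_sum R (r * N)%N _ c (fun t m => Aex s N t.1.1 m)
   (fun t m => Bex s t.1.1 (u t) m)); last first.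
  move=> t m; rewrite /Aex; case: ifP => _ //.
  by rewrite oppr_le0 mulr_ge0 // ltW // Ahat_gt0.
have A0 := Ahat_gt0 hs.
have q0 : 0 < 1 + 4 * Ahat s by lra.
have sq0 : Num.sqrt (1 + 4 * Ahat s) ^+ N != 0 by rewrite expf_neq0 // gt_eqF // sqrtr_gt0.
have rn0 : r%:R != 0 :> R by rewrite pnatr_eq0 -lt0n.
have T : forall t, c t * \prod_(m < r * N) Gf (Aex s N t.1.1 m) (Bex s t.1.1 (u t) m) =
    sg t * (expR (dotv (zt t) (mem t.1.2)) / r%:R).
  move=> t; rewrite prod_G // /c -mulrA; congr (_ * _).
  have E : expR (Cpp * sqnorm (zt t) + Cpp * sqnorm (mem t.1.2)) *
     expR (\sum_(j < N) u t j ^+ 2 / 2) = expR (dotv (zt t) (mem t.1.2)).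
    rewrite -expRD; congr expR; rewrite /Cpp /sqnorm /dotv /u !mulr_sumr -!big_split.
    by apply: eq_bigr => j _ /=; field.
  rewrite exprMn exprVn Dpp_sq // sqr_sqrtr ?ler0n // -E.
  by field; rewrite sq0 rn0.
under eq_bigr do rewrite T.
rewrite sum_pair.
under eq_bigr do rewrite big_bool.
rewrite sum_pair.
rewrite (eq_bigr (fun k => (\sum_(mu < M) (expR (dotv z2 (mem mu)) - expR (dotv z1 (mem mu)))) / r%:R)); last first.
  move=> k _; rewrite mulr_suml; apply: eq_bigr => mu _; rewrite /sg /zt /=; ring.
rewrite sumr_const card_ord; set X := \sum_(mu < M) _.
by rewrite -[(X / r%:R) *+ r]mulr_natr divfK.
Qed.
End main.


Section comb.
Context {R : realType}.

Lemma hamming_tri N (x y z : 'I_N -> R) : (hamming x z <= hamming x y + hamming y z)%N.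
Proof.
rewrite /hamming; apply: leq_trans (leq_card_setU _ _).1.
apply: subset_leq_card; apply/fintype.subsetP => j; rewrite !inE => hxz.
by case: eqP => [hxy|] //=; rewrite -hxy.
Qed.

Lemma hammingC N (x y : 'I_N -> R) : hamming x y = hamming y x.
Proof. by rewrite /hamming; apply: eq_card => j; rewrite !inE eq_sym. Qed.

Lemma spin_dot N (x y : 'I_N -> R) : is_spin x -> is_spin y ->
  dotv x y = N%:R - 2 * (hamming x y)%:R.
Proof.
move=> sx sy; rewrite /dotv /hamming.
have h1 : ((1:R) == -1) = false by apply/eqP; lra.
have h2 : ((-1:R) == 1) = false by apply/eqP; lra.
have -> : \sum_(j < N) x j * y j = \sum_(j < N) (1 - 2 * ((x j != y j) : nat)%:R).
  apply: eq_bigr => j _; case: (sx j) => ->; case: (sy j) => -> /=;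
  rewrite ?eqxx ?h1 ?h2 /=; lra.
rewrite sumrB sumr_const card_ord -mulr_sumr -natr_sum; congr (_ - 2 * _%:R).
rewrite -sum1_card [RHS]big_mkcond /=; apply: eq_bigr => j _; rewrite inE.
by case: (x j != y j).
Qed.

Lemma dotv_flip N (x y : 'I_N -> R) (i : 'I_N) :
  dotv (flip x i) y = dotv x y - 2 * (x i * y i).
Proof.
rewrite /dotv (bigD1 i) // [in RHS](bigD1 i) //= /flip eqxx.
have -> : \sum_(j < N | j != i) (if j == i then - x j else x j) * y j =
          \sum_(j < N | j != i) x j * y j.
  by apply: eq_bigr => j /negbTE ->.
ring.
Qed.

End comb.

End Aux.
Import Aux.

Theorem theorem1 (R : realType) (N M r : nat) (s tau rho : R)
  (mem : 'I_M -> 'I_N -> R) :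
  (0 < N)%N -> (0 < M)%N -> (0 < r)%N ->
  0 < s < 1 ->
  (forall mu, is_spin (mem mu)) ->
  0 < tau ->
  (forall mu nu : 'I_M, mu != nu -> tau * N%:R <= (hamming (mem mu) (mem nu))%:R) ->
  0 < rho -> rho < tau / 2 ->
  M%:R <= expR (2 * N%:R * (tau - 2 * rho)) * ((1 - expR (-2)) / (2 * expR 2)) ->
  forall (l : 'I_M) (xihat : 'I_N -> R) (i : 'I_N),
    is_spin xihat ->
    (hamming xihat (mem l))%:R <= rho * N%:R ->
    let Delta := fun omega : 'I_r -> 'I_N -> R =>
      E_rand s omega mem (flip xihat i) - E_rand s omega mem xihat in
    (xihat i = mem l i -> 0 < omega_expect Delta) /\
    (xihat i = - mem l i -> omega_expect Delta < 0).
Proof.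
move=> N0 M0 r0 hs hspin tau0 hsep rho0 rhot hM l xihat i sx hl Delta.
have hE : omega_expect Delta = \sum_(mu < M) (expR (dotv xihat (mem mu)) -
     expR (dotv xihat (mem mu) - 2 * (xihat i * mem mu i))).
  rewrite /Delta expect_diff //; apply: eq_bigr => mu _; by rewrite dotv_flip.
rewrite hE.
set n : R := N%:R in hsep hM hl *.
set P := expR (n - 2 * (tau - rho) * n).
set E0 := expR (2 * n * (tau - 2 * rho)) in hM.
set e2 := expR (2 : R) in hM *.
set em2 := expR (-2 : R) in hM.
have hQ : P * E0 <= expR (dotv xihat (mem l)).
  rewrite /P /E0 -expRD ler_expR (spin_dot sx (hspin l)).
  rewrite -/n; lra.
have hP : forall mu, mu != l -> expR (dotv xihat (mem mu)) <= P.
  move=> mu hmu; rewrite /P ler_expR (spin_dot sx (hspin mu)).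
  have h1 := hsep l mu ltac:(by rewrite eq_sym).
  have h2 := hamming_tri (mem l) xihat (mem mu).
  rewrite -(ler_nat R) natrD (hammingC (mem l) xihat) in h2.
  rewrite -/n; lra.
have e2ge : 1 + 2 <= e2 := expR_ge1Dx 2.
have em2e2 : em2 * e2 = 1 by rewrite /em2 /e2 -expRD addNr expR0.
have em2pos : 0 < em2 := expR_gt0 _.
have e2pos : 0 < e2 := expR_gt0 _.
have P0 : 0 < P := expR_gt0 _.
have hM' : M%:R * (2 * e2) <= E0 * (1 - em2).
  have k : E0 * ((1 - em2) / (2 * e2)) * (2 * e2) = E0 * (1 - em2).
    by field; rewrite gt_eqF.
  by rewrite -k ler_wpM2r // ltW // mulr_gt0.
have M0' : 0 < M%:R :> R by rewrite ltr0n.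
have sig : forall mu, xihat i * mem mu i = 1 \/ xihat i * mem mu i = -1.
  move=> mu; case: (sx i) => ->; case: (hspin mu i) => ->; lra.
have hsum : forall c : R, \sum_(mu < M) c = c + \sum_(mu < M | mu != l) c.
  by move=> c; rewrite (bigD1 l).
split => hi.
- have sl : xihat i * mem l i = 1.
    by rewrite hi; case: (hspin l i) => ->; lra.
  rewrite (bigD1 l) //= sl.
  set S := \sum_(mu < M | mu != l) _.
  have hS : \sum_(mu < M | mu != l) (P * (1 - e2)) <= S.
    apply: ler_sum => mu hmu.
    have ha := hP mu hmu.
    have hb : expR (dotv xihat (mem mu) - 2 * (xihat i * mem mu i)) <=
              expR (dotv xihat (mem mu)) * e2.
      by rewrite /e2 -expRD ler_expR; case: (sig mu) => ->; lra.
    have hc : 0 < expR (dotv xihat (mem mu)) := expR_gt0 _.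
    nra.
  have hc := hsum (P * (1 - e2)); rewrite sumr_const card_ord -mulr_natr in hc.
  have hl2 : expR (dotv xihat (mem l) - 2 * 1) = expR (dotv xihat (mem l)) * em2.
    by rewrite /em2 -expRD mulr1.
  rewrite hl2.
  set X := expR (dotv xihat (mem l)) in hQ *.
  have em2le : em2 <= 1 by nra.
  have k1 : P * E0 * (1 - em2) <= X * (1 - em2) by apply: ler_wpM2r => //; lra.
  have k2 : P * (M%:R * (2 * e2)) <= P * (E0 * (1 - em2)) by apply: ler_wpM2l => //; lra.
  have k3 : 0 < P * M%:R * (1 + e2) by rewrite !mulr_gt0 //; lra.
  have cle : P * (1 - e2) <= 0 by rewrite pmulr_rle0 //; lra.
  lra.
- have sl : xihat i * mem l i = -1.
    by rewrite hi; case: (hspin l i) => ->; lra.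
  rewrite (bigD1 l) //= sl.
  set S := \sum_(mu < M | mu != l) _.
  have hS : S <= \sum_(mu < M | mu != l) (P * (1 - em2)).
    apply: ler_sum => mu hmu.
    have ha := hP mu hmu.
    have hb : expR (dotv xihat (mem mu)) * em2 <=
              expR (dotv xihat (mem mu) - 2 * (xihat i * mem mu i)).
      by rewrite /em2 -expRD ler_expR; case: (sig mu) => ->; lra.
    have hc : 0 < expR (dotv xihat (mem mu)) := expR_gt0 _.
    nra.
  have hc := hsum (P * (1 - em2)); rewrite sumr_const card_ord -mulr_natr in hc.
  have hl2 : expR (dotv xihat (mem l) - 2 * -1) = expR (dotv xihat (mem l)) * e2.
    by rewrite /e2 -expRD; congr expR; ring.
  rewrite hl2.
  set X := expR (dotv xihat (mem l)) in hQ *.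
  have em2le : em2 <= 1 by nra.
  have k1 : X * (1 - e2) <= P * E0 * (1 - e2) by apply: ler_wnM2r => //; lra.
  have k2 : P * (M%:R * (2 * e2)) <= P * (E0 * (1 - em2)) by apply: ler_wpM2l => //; lra.
  have cge : 0 <= P * (1 - em2) by rewrite pmulr_rge0 //; lra.
  have k4 : P * (1 - em2) * M%:R < P * E0 * (e2 - 1).
    have E00 : 0 < E0 := expR_gt0 _.
    have j1 : (1 - em2) * M%:R < M%:R by nra.
    have j2 : M%:R * (2 * e2) <= E0 by nra.
    have j3 : M%:R <= M%:R * (2 * e2) * (e2 - 1) by nra.
    have j4 : M%:R * (2 * e2) * (e2 - 1) <= E0 * (e2 - 1) by apply: ler_wpM2r => //; lra.
    have j5 : (1 - em2) * M%:R < E0 * (e2 - 1) by lra.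
    by rewrite -mulrA -[P * E0 * _]mulrA ltr_pM2l.
  lra.
Qed.
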